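(* Let $K,T\subset\mathbb{R}^n$ be convex bodies and let $q=(q_1,\dots,q_m)$ be a closed $(K,T)$-Minkowski billiard trajectory with respect to the $K$-supporting hyperplanes $H_1,\dots,H_m$. Let $U$ be the inclusion-minimal linear subspace of $\mathbb{R}^n$ containing the outer unit normal vectors $n_K(q_1),\dots,n_K(q_m)$ normal to $H_1,\dots,H_m$, let $W=U^\perp$, and let $H_j^+$ be the closed half-space bounded by $H_j$ containing $K$. Then $H_j=(H_j\cap U)\oplus W$ and $H_j^+=(H_j^+\cap U)\oplus W$ for all $j$, the set $\bigcap_{j=1}^m(H_j^+\cap U)$ is nearly bounded in $U$, and $\bigcap_{j=1}^m H_j^+$ is nearly bounded in $\mathbb{R}^n$. If moreover $T$ is smooth, then $U$ coincides with the convex cone spanned by $n_K(q_1),\dots,n_K(q_m)$ and $\bigcap_{j=1}^m(H_j^+\cap U)$ is bounded in $U$ (and $\bigcap_{j=1}^mH_j^+$ is nearly bounded in $\mathbb{R}^n$).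
   Context: A convex body is a compact convex set in $\mathbb{R}^n$ containing the origin in its interior; it is smooth if through each boundary point there is a unique supporting hyperplane. For a convex set $C$ and $z\in\partial C$, $N_C(z)=\{v:\langle v,y-z\rangle\le 0\ \forall y\in C\}$. A subset $A$ of a linear space $U$ is nearly bounded in $U$ if it lies between two parallel affine hyperplanes of $U$. A closed polygonal curve $(q_1,\dots,q_m)$, $m\ge2$, always satisfies $q_j\ne q_{j+1}$ and $q_j\notin[q_{j-1},q_{j+1}]$ (indices mod $m$). A closed polygonal curve $q$ with vertices on $\partial K$ is a closed $(K,T)$-Minkowski billiard trajectory with respect to the $K$-supporting hyperplanes $H_1,\dots,H_m$ through $q_1,\dots,q_m$ if there are $p_1,\dots,p_m\in\partial T$, outer unit normals $n_K(q_j)\in N_K(q_j)$ normal to $H_j$, and $\mu_j\ge 0$ with $q_{j+1}-q_j\in N_T(p_j)$ and $p_{j+1}-p_j=-\mu_{j+1}n_K(q_{j+1})$ for all $j$. *)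

(* Defs.v *)
From HB Require Import structures.
From mathcomp Require Import all_boot all_order all_algebra.
From mathcomp Require Import all_classical all_reals all_analysis.
Set Implicit Arguments. Unset Strict Implicit. Unset Printing Implicit Defensive.
Import Order.TTheory GRing.Theory Num.Theory.
Import numFieldNormedType.Exports.
Local Open Scope classical_set_scope.
Local Open Scope ring_scope.

Section Defs.
Context {R : realType} {n : nat}.
Notation V := 'rV[R]_n.

Definition dot (u v : V) : R := \sum_(i < n) u 0 i * v 0 i.

Definition convex_set (C : set V) : Prop :=
  forall x y t, C x -> C y -> 0 <= t -> t <= 1 -> C (t *: x + (1 - t) *: y).

Definition convex_body (K : set V) : Prop :=
  [/\ compact K, convex_set K & (interior K) 0].

Definition bd (C : set V) : set V := closure C `\` interior C.

Definition normal_cone (C : set V) (z : V) : set V :=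
  [set v | forall y, C y -> dot v (y - z) <= 0].

Definition supporting_hyperplane (C : set V) (z : V) (H : set V) : Prop :=
  exists v : V, [/\ v != 0, H = [set x | dot v x = dot v z]
                  & forall y, C y -> dot v y <= dot v z].

Definition smooth_body (C : set V) : Prop :=
  forall z, bd C z -> forall H1 H2,
    supporting_hyperplane C z H1 -> supporting_hyperplane C z H2 -> H1 = H2.

Definition segment (a b : V) : set V :=
  [set t *: a + (1 - t) *: b | t in [set t : R | 0 <= t <= 1]].

Definition closed_polygonal_curve (m : nat) (q : 'I_m -> V) : Prop :=
  (2 <= m)%N /\
  forall j : 'I_m, q j != q (ordS j) /\ ~ segment (q (ord_pred j)) (q (ordS j)) (q j).

Definition outer_unit_normal_to (K : set V) (z : V) (H : set V) (v : V) : Prop :=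
  [/\ dot v v = 1, normal_cone K z v & H = [set x | dot v (x - z) = 0]].

Definition minkowski_billiard_trajectory (K T : set V) (m : nat)
    (q : 'I_m -> V) (H : 'I_m -> set V) : Prop :=
  [/\ closed_polygonal_curve q,
      forall j, bd K (q j),
      forall j, supporting_hyperplane K (q j) (H j) &
      exists (p : 'I_m -> V) (nK : 'I_m -> V) (mu : 'I_m -> R),
        forall j : 'I_m,
          [/\ bd T (p j),
              outer_unit_normal_to K (q j) (H j) (nK j),
              0 <= mu j,
              normal_cone T (p j) (q (ordS j) - q j) &
              p (ordS j) - p j = - (mu (ordS j) *: nK (ordS j))]].

Definition span_of (m : nat) (v : 'I_m -> V) : set V :=
  [set \sum_(j < m) c j *: v j | c in [set: 'I_m -> R]].

Definition cone_of (m : nat) (v : 'I_m -> V) : set V :=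
  [set \sum_(j < m) c j *: v j | c in [set c : 'I_m -> R | forall j, 0 <= c j]].

Definition orth_compl (U : set V) : set V :=
  [set w | forall u, U u -> dot w u = 0].

Definition mink_sum (A B : set V) : set V := [set a + b | a in A & b in B].

Definition nearly_bounded_in (U A : set V) : Prop :=
  A `<=` U /\
  exists a : V, exists c1 c2 : R,
    [/\ U a, a != 0 & forall x, A x -> c1 <= dot a x <= c2].

Definition bounded_in (U A : set V) : Prop :=
  A `<=` U /\ exists M : R, forall x, A x -> dot x x <= M.

End Defs.

(* Main.v *)
Require Import Defs.
From HB Require Import structures.
From mathcomp Require Import all_boot all_order all_algebra.
From mathcomp Require Import all_classical all_reals all_analysis.
From mathcomp Require Import ring lra.
Import Order.TTheory GRing.Theory Num.Theory.
Import numFieldNormedType.Exports.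
Local Open Scope classical_set_scope.
Local Open Scope ring_scope.
Section S.
Context {R : realType} {n : nat}.
Implicit Types u v w x y : 'rV[R]_n.

Lemma dotC u v : dot u v = dot v u.
Proof. by rewrite /dot; apply: eq_bigr => i _; rewrite mulrC. Qed.
Lemma dotDr u v w : dot u (v + w) = dot u v + dot u w.
Proof. by rewrite /dot -big_split; apply: eq_bigr => i _; rewrite !mxE mulrDr. Qed.
Lemma dotZr a u v : dot u (a *: v) = a * dot u v.
Proof. by rewrite /dot mulr_sumr; apply: eq_bigr => i _; rewrite !mxE mulrCA. Qed.
Lemma dotNr u v : dot u (- v) = - dot u v.
Proof. by rewrite -scaleN1r dotZr mulN1r. Qed.
Lemma dotBr u v w : dot u (v - w) = dot u v - dot u w.
Proof. by rewrite dotDr dotNr. Qed.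
Lemma dotDl u v w : dot (v + w) u = dot v u + dot w u.
Proof. by rewrite dotC dotDr !(dotC u). Qed.
Lemma dotZl a u v : dot (a *: v) u = a * dot v u.
Proof. by rewrite dotC dotZr dotC. Qed.
Lemma dotBl u v w : dot (v - w) u = dot v u - dot w u.
Proof. by rewrite dotC dotBr !(dotC u). Qed.
Lemma dot0r u : dot u 0 = 0.
Proof. by rewrite -(scale0r 0) dotZr mul0r. Qed.
Lemma dot_sumr m u (c : 'I_m -> R) (v : 'I_m -> 'rV[R]_n) :
  dot u (\sum_j c j *: v j) = \sum_j c j * dot u (v j).
Proof.
elim/big_rec2: _ => [|j a b _ <-]; first by rewrite dot0r.
by rewrite dotDr dotZr.
Qed.
Lemma dot_ge0 u : 0 <= dot u u.
Proof. by rewrite /dot sumr_ge0 // => i _; rewrite -expr2 sqr_ge0. Qed.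
Lemma dot_eq0 u : dot u u = 0 -> u = 0.
Proof.
move=> /eqP; rewrite /dot psumr_eq0 => [/allP H|i _]; last by rewrite -expr2 sqr_ge0.
apply/rowP => i; rewrite mxE; have := H i (mem_index_enum _).
by rewrite -expr2 sqrf_eq0 => /eqP.
Qed.
End S.
Section S2.
Context {R : realType} {n : nat}.
Implicit Types u v w x y : 'rV[R]_n.

Lemma dot_gt0 v : v != 0 -> 0 < dot v v.
Proof.
move=> v0; rewrite lt_def dot_ge0 andbT; apply/eqP => /dot_eq0 h.
by rewrite h eqxx in v0.
Qed.

Lemma nc_pos (C : set 'rV[R]_n) p v :
  interior C 0 -> normal_cone C p v -> v != 0 -> 0 < dot v p.
Proof.
move=> /nbhs_ballP [e e0 sub] Nv v0.
have a0 : 0 <= `|v| by [].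
set k := e / (2 * (`|v| + 1)).
have k0 : 0 < k by rewrite /k divr_gt0 // mulr_gt0 // ltr_wpDl.
have Ck : C (k *: v).
  apply: sub; rewrite -ball_normE /ball_ /= sub0r normrN normrZ (gtr0_norm k0).
  rewrite /k mulrAC ltr_pdivrMr ?mulr_gt0 ?ltr_wpDl //.
  rewrite ltr_pM2l //; lra.
have := Nv _ Ck; rewrite dotBr dotZr subr_le0 => h.
apply: lt_le_trans h; by rewrite mulr_gt0 // dot_gt0.
Qed.

Lemma hyp_prop v1 v2 z1 z2 : v1 != 0 ->
  (forall x, dot v1 x = dot v1 z1 -> dot v2 x = dot v2 z2) ->
  exists c, v2 = c *: v1.
Proof.
move=> v10 H.
have d0 : dot v1 v1 != 0 by rewrite gt_eqF // dot_gt0.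
set k := dot v1 v2 / dot v1 v1.
set w := v2 - k *: v1.
have h1 : dot v1 w = 0.
  by rewrite /w dotBr dotZr /k mulfVK // subrr.
have h2 : dot v2 z1 = dot v2 z2 by apply: H.
have h3 : dot v2 w = 0.
  have := H (z1 + w); rewrite (@dotDr _ _ v1 z1 w) (@dotDr _ _ v2 z1 w) h1 addr0 => /(_ erefl).
  by rewrite h2 => /eqP; rewrite -subr_eq0 addrAC subrr add0r => /eqP.
have : dot w w = 0 by rewrite {1}/w dotBl dotZl h1 h3 mulr0 subr0.
move=> /dot_eq0 /eqP; rewrite subr_eq0 => /eqP ->; by exists k.
Qed.

Lemma sum_ordS (V : zmodType) m (F : 'I_m -> V) :
  \sum_j F (ordS j) = \sum_j F j.
Proof. by rewrite [RHS](reindex_inj (@ordS_inj m)). Qed.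

Lemma le_sum_term m (F : 'I_m -> R) j :
  (forall i, 0 <= F i) -> F j <= \sum_i F i.
Proof.
move=> h; rewrite (bigD1 j) //= lerDl sumr_ge0 // => i _; exact: h.
Qed.
End S2.
Section S3.
Context {R : realType} {n : nat}.

Lemma trmx_mul_self0 p q (A : 'M[R]_(p, q)) : A^T *m A = 0 -> A = 0.
Proof.
move=> h; apply/matrixP => i j; rewrite mxE.
have : (A^T *m A) j j = 0 by rewrite h mxE.
rewrite mxE => /eqP; rewrite psumr_eq0 => [/allP H|k _]; last first.
  by rewrite mxE -expr2 sqr_ge0.
have := H i (mem_index_enum _); rewrite mxE -expr2 sqrf_eq0 => /eqP //.
Qed.

Lemma proj_exists m (nK : 'I_m -> 'rV[R]_n) : exists P : 'M[R]_m, forall x j,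
  dot (nK j) (x - \sum_i (\sum_k dot (nK k) x * P k i) *: nK i) = 0.
Proof.
pose N : 'M[R]_(m,n) := \matrix_(j, i) nK j 0 i.
pose G := N *m N^T.
exists (pinvmx G) => x j.
have NC : N^T *m cokermx G = 0.
  apply: trmx_mul_self0.
  by rewrite trmx_mul trmxK mulmxA -(mulmxA _ N) -/G -mulmxA mulmx_coker mulmx0.
set y := x *m N^T.
have yG : (y <= G)%MS by rewrite submxE /y -mulmxA NC mulmx0.
have e := mulmxKpV yG.
set c := y *m pinvmx G in e.
have -> : \sum_i (\sum_k dot (nK k) x * pinvmx G k i) *: nK i = c *m N.
  rewrite mulmx_sum_row; apply: eq_bigr => i _.
  have -> : row i N = nK i by apply/rowP => l; rewrite !mxE.
  congr (_ *: _); rewrite /c mxE; apply: eq_bigr => k _.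
  rewrite /y mxE dotC; congr (_ * _); rewrite /dot [RHS]mxE; apply: eq_bigr => l _.
  by rewrite !mxE.
have : ((x - c *m N) *m N^T) 0 j = 0.
  by rewrite mulmxBl -mulmxA -/G e -/y subrr mxE.
rewrite mxE => h; rewrite dotC -[RHS]h /dot; apply: eq_bigr => l _; by rewrite !mxE.
Qed.
End S3.
Section S4.
Context {R : realType} {n : nat}.
Local Notation V := 'rV[R]_n.

Lemma span_lin m (nK : 'I_m -> V) c : span_of nK (\sum_i c i *: nK i).
Proof. by exists c. Qed.

Lemma span_nK m (nK : 'I_m -> V) j : span_of nK (nK j).
Proof.
exists (fun i => (i == j)%:R) => //.
rewrite (bigD1 j) //= eqxx scale1r big1 ?addr0 // => i /negbTE ->.
by rewrite scale0r.
Qed.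

Lemma span_sub m (nK : 'I_m -> V) x y :
  span_of nK x -> span_of nK y -> span_of nK (x - y).
Proof.
move=> [c _ <-] [d _ <-]; exists (fun i => c i - d i) => //.
by rewrite -sumrB; apply: eq_bigr => i _; rewrite scalerBl.
Qed.

Lemma orth_span m (nK : 'I_m -> V) w :
  (forall j, dot w (nK j) = 0) -> forall u, span_of nK u -> dot w u = 0.
Proof.
move=> h u [c _ <-]; rewrite dot_sumr big1 // => i _; by rewrite h mulr0.
Qed.

Lemma span_orth0 m (nK : 'I_m -> V) w :
  span_of nK w -> (forall j, dot w (nK j) = 0) -> w = 0.
Proof. by move=> sw h; apply: dot_eq0; apply: orth_span. Qed.

Lemma decomp m (nK : 'I_m -> V) (z : V) j (Pr : R -> Prop) :
  [set x | Pr (dot (nK j) (x - z))] =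
  mink_sum ([set x | Pr (dot (nK j) (x - z))] `&` span_of nK)
           (orth_compl (span_of nK)).
Proof.
have [P hP] := @proj_exists _ _ _ nK.
apply/seteqP; split => x /=.
  move=> hx.
  have hw := hP x.
  set u := \sum_i (\sum_k dot (nK k) x * P k i) *: nK i in hw *.
  exists u; last exists (x - u); last by rewrite addrC subrK.
    split; last exact: span_lin.
    change (Pr (dot (nK j) (u - z))).
    have -> : u - z = (x - z) - (x - u).
      by rewrite opprB addrCA addrAC subrr add0r.
    by rewrite dotBr hw subr0.
  apply: orth_span => i; by rewrite dotC hw.
move=> [a [ha Ua] [b Wb <-]].
rewrite /= addrAC dotDr (@dotC _ _ (nK j) b) (Wb (nK j)) ?addr0 //; exact: span_nK.
Qed.

Lemma bound_lemma m (nK q : 'I_m -> V) (mu : 'I_m -> R) j x :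
  (forall i, 0 <= mu i) -> \sum_i mu i * dot (nK i) x = 0 -> 0 < mu j ->
  (forall i, dot (nK i) (x - q i) <= 0) ->
  - (\sum_(i | i != j) mu i * dot (nK i) (q i)) / mu j <= dot (nK j) x
  <= dot (nK j) (q j).
Proof.
move=> mu0 hs muj hx.
have hB i : dot (nK i) x <= dot (nK i) (q i).
  by have := hx i; rewrite dotBr subr_le0.
rewrite hB andbT ler_pdivrMr //.
move: hs; rewrite (bigD1 j) //= => hs.
have : \sum_(i | i != j) mu i * dot (nK i) x <=
       \sum_(i | i != j) mu i * dot (nK i) (q i).
  by apply: ler_sum => i _; apply: ler_wpM2l.
move: hs; set s1 := \sum_(i | _) _; set s2 := \sum_(i | _) _ => hs h.
rewrite mulrC; lra.
Qed.

Lemma abs_bound (L y B : R) : L <= y <= B -> `|y| <= `|L| + `|B|.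
Proof.
move=> /andP [h1 h2].
have := ler_norm B; have := ler_norm (- L); rewrite normrN.
have := normr_ge0 B; have := normr_ge0 L.
rewrite ler_norml => *; apply/andP; split; lra.
Qed.
End S4.
Theorem proposition3p8 (R : realType) (n m : nat)
    (K T : set 'rV[R]_n) (q : 'I_m -> 'rV[R]_n) (H : 'I_m -> set 'rV[R]_n) :
  convex_body K -> convex_body T ->
  minkowski_billiard_trajectory K T q H ->
  forall nK : 'I_m -> 'rV[R]_n,
    (forall j, outer_unit_normal_to K (q j) (H j) (nK j)) ->
    let U := span_of nK in
    let W := orth_compl U in
    let Hplus := fun j : 'I_m => [set x | dot (nK j) (x - q j) <= 0] in
    [/\ forall j, H j = mink_sum (H j `&` U) W,
        forall j, Hplus j = mink_sum (Hplus j `&` U) W,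
        nearly_bounded_in U (\bigcap_j (Hplus j `&` U)),
        nearly_bounded_in setT (\bigcap_j Hplus j) &
        smooth_body T ->
          [/\ U = cone_of nK,
              bounded_in U (\bigcap_j (Hplus j `&` U)) &
              nearly_bounded_in setT (\bigcap_j Hplus j)]].
Proof.
move=> [cK convK intK] [cT convT intT] [[m2 curveP] bdK supp [p [nK' [mu Htr]]]].
move=> nK HnK U W Hplus.
have nK0 j : nK j != 0.
  have [u1 _ _] := HnK j; apply/eqP => h; move: u1; rewrite h dot0r => /eqP.
  by rewrite eq_sym oner_eq0.
have hnK' j : nK' j = nK j.
  have [_ [u1 nc1 H1] _ _ _] := Htr j.
  have [u2 nc2 H2] := HnK j.
  have [c hc] : exists c, nK' j = c *: nK j.
    apply: (@hyp_prop _ _ (nK j) (nK' j) (q j) (q j)) => // x hx.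
    have : H j x by rewrite H2 /= dotBr hx subrr.
    by rewrite H1 /= dotBr => /eqP; rewrite subr_eq0 => /eqP.
  have nK'0 : nK' j != 0.
    apply/eqP => h; move: u1; rewrite h dot0r => /eqP.
    by rewrite eq_sym oner_eq0.
  have p1 := nc_pos _ _ _ intK nc1 nK'0.
  have p2 := nc_pos _ _ _ intK nc2 (nK0 j).
  move: p1; rewrite hc dotZl pmulr_lgt0 // => c0.
  move: u1; rewrite hc dotZl dotZr u2 mulr1 => cc.
  have -> : c = 1 by nra.
  by rewrite scale1r.
have mu0 j : 0 <= mu j.
  by have [_ _ ? _ _] := Htr j.
have Hsum : \sum_j mu j *: nK j = 0.
  have : \sum_j (p (ordS j) - p j) = \sum_j - (mu (ordS j) *: nK' (ordS j)).
    by apply: eq_bigr => j _; have [_ _ _ _ ->] := Htr j.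
  rewrite sumrB (@sum_ordS _ _ p) subrr sumrN (@sum_ordS _ _ (fun j => mu j *: nK' j)).
  move/eqP; rewrite eq_sym oppr_eq0 => /eqP h; rewrite -[RHS]h.
  by apply: eq_bigr => j _; rewrite hnK'.
have Hdot x : \sum_i mu i * dot (nK i) x = 0.
  have : dot x (\sum_j mu j *: nK j) = 0 by rewrite Hsum dot0r.
  rewrite dot_sumr => h; rewrite -[RHS]h; apply: eq_bigr => i _; by rewrite dotC.
have m0 : (0 < m)%N by apply: leq_trans m2.
have [j0 muj0] : exists j0, 0 < mu j0.
  apply: contrapT => hn.
  have mu_eq0 j : mu j = 0.
    apply/eqP; rewrite eq_le mu0 andbT leNgt; apply/negP => h; apply: hn.
    by exists j.
  have pS j : p (ordS j) = p j.
    have [_ _ _ _] := Htr j; rewrite mu_eq0 scale0r oppr0 => /eqP.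
    by rewrite subr_eq0 => /eqP.
  set S := \sum_j dot (q (ordS j) - q j) (p j).
  have S0 : S = 0.
    rewrite /S; under eq_bigr => j _ do rewrite dotBl.
    rewrite sumrB; under eq_bigr => j _ do rewrite -pS.
    by rewrite (@sum_ordS _ _ (fun j => dot (q j) (p j))) subrr.
  have Spos : 0 < S.
    pose o := Ordinal m0.
    apply: (@lt_le_trans _ _ (dot (q (ordS o) - q o) (p o))); last first.
      apply: le_sum_term => i; apply: ltW.
      have [_ _ _ nc _] := Htr i; apply: nc_pos _ _ _ intT nc _.
      by have [+ _] := curveP i; rewrite eq_sym -subr_eq0.
    have [_ _ _ nc _] := Htr o; apply: nc_pos _ _ _ intT nc _.
    by have [+ _] := curveP o; rewrite eq_sym -subr_eq0.
  by rewrite S0 ltxx in Spos.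
have nKU j : U (nK j) by apply: span_nK.
pose L j := - (\sum_(i | i != j) mu i * dot (nK i) (q i)) / mu j.
have bnd j x : 0 < mu j -> (forall i, dot (nK i) (x - q i) <= 0) ->
    L j <= dot (nK j) x <= dot (nK j) (q j).
  by move=> muj hx; apply: bound_lemma.
have NB : nearly_bounded_in setT (\bigcap_j Hplus j).
  split => //; exists (nK j0), (L j0), (dot (nK j0) (q j0)); split => //.
  by move=> x hx; apply: bnd => // i; exact: (hx i I).
have part1 : forall j, H j = mink_sum (H j `&` U) W.
  move=> j; have [_ _ ->] := HnK j.
  exact: (@decomp _ _ _ nK (q j) j (fun r => r = 0)).
have part2 : forall j, Hplus j = mink_sum (Hplus j `&` U) W.
  move=> j; exact: (@decomp _ _ _ nK (q j) j (fun r => r <= 0)).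
split => //.
  split; first by move=> x hx; have [] := hx j0 I.
  exists (nK j0), (L j0), (dot (nK j0) (q j0)); split => //.
  by move=> x hx; apply: bnd => // i; have [] := hx i I.
move=> Tsm.
have mupos j : 0 < mu j.
  apply: contrapT => hn.
  have mk0 : mu j = 0 by apply/eqP; rewrite eq_le mu0 andbT leNgt; apply/negP.
  pose i := ord_pred j.
  have ij : ordS i = j by rewrite /i ord_predK.
  have [bdp _ _ nc1 hp] := Htr i.
  rewrite ij mk0 scale0r oppr0 in hp.
  have pji : p j = p i by move/eqP: hp; rewrite subr_eq0 => /eqP.
  have [_ _ _ nc2 _] := Htr j.
  rewrite pji in nc2; rewrite ij in nc1.
  have v10 : q j - q i != 0.
    by have [+ _] := curveP i; rewrite ij eq_sym -subr_eq0.
  have v20 : q (ordS j) - q j != 0.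
    by have [+ _] := curveP j; rewrite eq_sym -subr_eq0.
  have supp1 : supporting_hyperplane T (p i)
      [set x | dot (q j - q i) x = dot (q j - q i) (p i)].
    exists (q j - q i); split => // y Ty.
    by have := nc1 y Ty; rewrite dotBr subr_le0.
  have supp2 : supporting_hyperplane T (p i)
      [set x | dot (q (ordS j) - q j) x = dot (q (ordS j) - q j) (p i)].
    exists (q (ordS j) - q j); split => // y Ty.
    by have := nc2 y Ty; rewrite dotBr subr_le0.
  have E := Tsm _ bdp _ _ supp1 supp2.
  have [c hc] : exists c, q (ordS j) - q j = c *: (q j - q i).
    apply: (@hyp_prop _ _ (q j - q i) (q (ordS j) - q j) (p i) (p i)) => // x hx.
    have : [set x | dot (q j - q i) x = dot (q j - q i) (p i)] x by [].
    by rewrite E.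
  have c0 : 0 < c.
    have := nc_pos _ _ _ intT nc2 v20; rewrite hc dotZl pmulr_lgt0 //.
    exact: nc_pos _ _ _ intT nc1 v10.
  have [_] := curveP j; apply.
  have hc1 : 0 < 1 + c by lra.
  exists (c / (1 + c)).
    rewrite /= divr_ge0 ?ler_pdivrMr //= ?(ltW c0) ?(ltW hc1) //; lra.
  have qS : q (ordS j) = c *: (q j - q i) + q j by rewrite -hc subrK.
  rewrite qS -/i; set t := c / (1 + c).
  have e1 : (1 - t) * c = t by rewrite /t; field; apply: lt0r_neq0.
  rewrite scalerDr scalerA e1 scalerBr addrA [t *: q i + _]addrC subrK.
  by rewrite -scalerDl addrC subrK scale1r.
split => //.
  apply/seteqP; split => x /=.
    move=> [c _ <-].
    pose t := \sum_i `|c i| / mu i.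
    exists (fun i => c i + t * mu i).
      move=> i /=.
      have : `|c i| / mu i <= t.
        by apply: le_sum_term => k; rewrite divr_ge0.
      rewrite ler_pdivrMr // => h.
      have := ler_norm (- c i); rewrite normrN => h2; lra.
    rewrite /=; under eq_bigr => i _ do rewrite scalerDl -scalerA.
    by rewrite big_split /= -scaler_sumr Hsum scaler0 addr0.
  move=> [c _ <-]; exact: span_lin.
split; first by move=> x hx; have [] := hx j0 I.
have [P hP] := @proj_exists _ _ _ nK.
pose Bd i := `|L i| + `|dot (nK i) (q i)|.
pose Y := \sum_i Bd i.
exists (\sum_i \sum_k Y * `|P k i| * Y).
move=> x hx.
have Ux : U x by have [] := hx j0 I.
have hxi i : dot (nK i) (x - q i) <= 0 by have [] := hx i I.
have yb i : `|dot (nK i) x| <= Y.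
  apply: le_trans (abs_bound _ _ _ (bnd i x (mupos i) hxi)) _.
  by apply: le_sum_term => k; rewrite /Bd addr_ge0.
have Y0 : 0 <= Y by apply: le_trans (yb j0).
have xu : x = \sum_i (\sum_k dot (nK k) x * P k i) *: nK i.
  apply/eqP; rewrite -subr_eq0; apply/eqP.
  apply: span_orth0; first exact: span_sub _ _ _ _ Ux (span_lin _ _ _).
  by move=> j; rewrite dotC; apply: hP.
have -> : dot x x = \sum_i \sum_k dot (nK k) x * P k i * dot (nK i) x.
  rewrite {2}xu dot_sumr; apply: eq_bigr => i _.
  by rewrite mulr_suml; apply: eq_bigr => k _; rewrite (dotC x).
apply: ler_sum => i _; apply: ler_sum => k _.
apply: le_trans (ler_norm _) _; rewrite !normrM.
apply: ler_pM; rewrite ?mulr_ge0 //.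
by apply: ler_pM.
Qed.
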